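(* Let $n,m\ge 2$ and $K$ be positive integers, $T=mn$, and consider the one-way fixed effects panel regression model \[ \mathbf{y}=\mathbf{X}\boldsymbol{\beta}+\mathbf{Z}\boldsymbol{\gamma}+\mathbf{u}, \] where $\mathbf{y}\in\mathbb{R}^T$ is the response vector, $\mathbf{X}$ is a known non-stochastic real $(T\times K)$ matrix, $\boldsymbol{\beta}\in\mathbb{R}^K$ and $\boldsymbol{\gamma}\in\mathbb{R}^n$ are unknown parameters, $\mathbf{Z}=\mathbf{I}_n\otimes\mathbf{e}_m$ with $\mathbf{e}_m$ the $(m\times1)$ vector of ones, $E(\mathbf{u})=\mathbf{0}$ and $E(\mathbf{u}\mathbf{u}')=\mathbf{I}_n\otimes\boldsymbol{\Sigma}$ with $\boldsymbol{\Sigma}$ a known symmetric positive definite $(m\times m)$ matrix. Define \[ \mathbf{Q}=\mathbf{Z}\big(\mathbf{Z}'(\mathbf{I}_n\otimes\boldsymbol{\Sigma}^{-1})\mathbf{Z}\big)^{-1}\mathbf{Z}'(\mathbf{I}_n\otimes\boldsymbol{\Sigma}^{-1}),\qquad \mathbf{P}=(\mathbf{I}_n\otimes\boldsymbol{\Sigma}^{-1})(\mathbf{I}_T-\mathbf{Q}), \] $\mathbf{M}_m=\mathbf{I}_m-\mathbf{e}_m\mathbf{e}_m'/m$, $\mathbf{M}=\mathbf{I}_n\otimes\mathbf{M}_m$, and let $(\mathbf{I}_n\otimes\mathbf{M}_m\boldsymbol{\Sigma}\mathbf{M}_m)^{+}$ denote the Moore–Penrose inverse of $\mathbf{I}_n\otimes\mathbf{M}_m\boldsymbol{\Sigma}\mathbf{M}_m$.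 Set $\mathbf{C}_+=\mathbf{X}'\mathbf{M}(\mathbf{I}_n\otimes\mathbf{M}_m\boldsymbol{\Sigma}\mathbf{M}_m)^{+}\mathbf{M}\mathbf{X}$, and assume that $\mathbf{X}'\mathbf{P}\mathbf{X}$ and $\mathbf{C}_+$ are nonsingular. Define \[ \hat{\boldsymbol{\beta}}_{GLS}=(\mathbf{X}'\mathbf{P}\mathbf{X})^{-1}\mathbf{X}'\mathbf{P}\mathbf{y},\qquad \hat{\boldsymbol{\beta}}_{MLS}=\mathbf{C}_+^{-1}\mathbf{X}'\mathbf{M}(\mathbf{I}_n\otimes\mathbf{M}_m\boldsymbol{\Sigma}\mathbf{M}_m)^{+}\mathbf{y}. \] Then $\hat{\boldsymbol{\beta}}_{MLS}=\hat{\boldsymbol{\beta}}_{GLS}$ (for every realization $\mathbf{y}\in\mathbb{R}^T$).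
   Context: $\otimes$ denotes the Kronecker product; $\mathbf{I}_k$ the $k\times k$ identity matrix. The Moore–Penrose inverse $\mathbf{B}^+$ of a matrix $\mathbf{B}$ is the unique matrix satisfying $\mathbf{B}\mathbf{B}^+\mathbf{B}=\mathbf{B}$, $\mathbf{B}^+\mathbf{B}\mathbf{B}^+=\mathbf{B}^+$, and $\mathbf{B}\mathbf{B}^+$, $\mathbf{B}^+\mathbf{B}$ symmetric. $\hat{\boldsymbol{\beta}}_{GLS}$ is the generalized least squares estimator of $\boldsymbol{\beta}$ in the fixed effects model, and $\hat{\boldsymbol{\beta}}_{MLS}$ is the Moore–Penrose inverse least squares estimator of $\boldsymbol{\beta}$ in the within-transformed model $\mathbf{M}\mathbf{y}=\mathbf{M}\mathbf{X}\boldsymbol{\beta}+\mathbf{M}\mathbf{u}$, whose error has singular dispersion $\mathbf{I}_n\otimes\mathbf{M}_m\boldsymbol{\Sigma}\mathbf{M}_m$. *)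

(* Defs.v *)
From mathcomp Require Import all_boot all_order all_algebra.
From mathcomp Require Export mxtens.
Set Implicit Arguments. Unset Strict Implicit. Unset Printing Implicit Defensive.
Import Order.TTheory GRing.Theory Num.Theory.
Local Open Scope ring_scope.

Definition is_MP_inverse (R : realFieldType) (p q : nat)
  (B : 'M[R]_(p, q)) (Bp : 'M[R]_(q, p)) : Prop :=
  [/\ B *m Bp *m B = B, Bp *m B *m Bp = Bp,
      (B *m Bp)^T = B *m Bp & (Bp *m B)^T = Bp *m B].

Definition sym_pos_def (R : realFieldType) (k : nat) (S : 'M[R]_k) : Prop :=
  S^T = S /\ forall x : 'cV[R]_k, x != 0 -> 0 < (x^T *m S *m x) ord0 ord0.

Definition ones (R : realFieldType) (k : nat) : 'cV[R]_k := const_mx 1.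

Definition centering (R : realFieldType) (k : nat) : 'M[R]_k :=
  1%:M - (k%:R)^-1 *: (ones R k *m (ones R k)^T).

(* Main.v *)
Require Import Defs.
From mathcomp Require Import all_boot all_order all_algebra.
From mathcomp Require Import mxtens.
Import Order.TTheory GRing.Theory Num.Theory.
Local Open Scope ring_scope.

Lemma mp_eq (R : realFieldType) (p : nat) (V P G M : 'M[R]_p) :
  V^T = V -> V *m P *m V = V -> P *m V *m P = P -> P *m V = M -> V *m P = M ->
  is_MP_inverse V G -> G = P.
Proof.
move=> VT VPV PVP PV VP [h1 h2 h3 h4].
have e1 : V *m G^T = G *m V by rewrite -h4 trmx_mul VT.
have e2 : G^T *m V = V *m G by rewrite -h3 trmx_mul VT.
have a1 : V *m G^T *m G = G by rewrite e1.
have a2 : G *m G^T *m V = G by rewrite -mulmxA e2 mulmxA.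
have g1 : G = M *m G.
  transitivity (V *m P *m (V *m G^T *m G)); last by rewrite a1 VP.
  by rewrite !mulmxA VPV a1.
have g2 : G = G *m M.
  transitivity (G *m G^T *m V *m (P *m V)); last by rewrite a2 PV.
  by rewrite -!mulmxA (mulmxA V P V) VPV !mulmxA a2.
transitivity (P *m V *m G *m V *m P).
  by rewrite PV -!mulmxA VP -g2 -g1.
by rewrite -(mulmxA P V G) -(mulmxA P) h1 PVP.
Qed.
Section Mlev.
Variables (R : realFieldType) (m : nat) (S : 'M[R]_m).
Hypothesis hm : (0 < m)%N.
Hypothesis hS : sym_pos_def S.

Local Notation e := (ones R m).
Local Notation Si := (invmx S).
Local Notation c := (e^T *m Si *m e).
Local Notation Mm := (centering R m).
Definition Amat := Si - Si *m e *m invmx c *m e^T *m Si.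
Local Notation A := Amat.

Lemma tr11 (a : 'M[R]_1) : a^T = a.
Proof. by apply/matrixP=> i j; rewrite !ord1 mxE. Qed.

Lemma S_unit : S \in unitmx.
Proof.
case: hS => ST hp.
rewrite unitmxE unitfE; apply/negP => /det0P [v v0 vS].
have : v^T != 0 by rewrite trmx_eq0.
move/hp; rewrite trmxK vS mul0mx mxE ltxx //.
Qed.

Lemma SiT : Si^T = Si.
Proof. by rewrite trmx_inv; case: hS => ->. Qed.

Lemma e_neq0 : e != 0.
Proof.
apply/negP => /eqP/matrixP/(_ (Ordinal hm) ord0).
by rewrite !mxE => /eqP; rewrite oner_eq0.
Qed.

Lemma c_unit : c \in unitmx.
Proof.
have Su := S_unit.
case: hS => ST hp.
have x0 : Si *m e != 0.
  apply/negP => /eqP h; move: e_neq0.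
  by rewrite -(mulKVmx Su e) h mulmx0 eqxx.
move: (hp _ x0).
rewrite trmx_mul SiT -!mulmxA (mulmxA S Si) (mulmxV Su) mul1mx mulmxA.
rewrite unitmxE unitfE det_mx11 => h; by rewrite gt_eqF.
Qed.

Lemma Ae : A *m e = 0.
Proof.
rewrite /Amat mulmxBl -!mulmxA (mulmxA e^T Si e).
by rewrite (mulVmx c_unit) mulmx1 subrr.
Qed.

Lemma AT : A^T = A.
Proof.
rewrite /Amat linearB /= !trmx_mul !trmxK SiT trmx_inv tr11 !mulmxA //.
Qed.

Lemma eA : e^T *m A = 0.
Proof. by rewrite -AT -trmx_mul Ae trmx0. Qed.

Lemma ete : e^T *m e = (m%:R : R)%:M.
Proof.
apply/matrixP=> i j; rewrite !ord1 !mxE /=.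
rewrite (eq_bigr (fun=> 1)); last by move=> k _; rewrite !mxE mulr1.
by rewrite sumr_const card_ord.
Qed.

Lemma Mme : Mm *m e = 0.
Proof.
rewrite /centering mulmxBl mul1mx -scalemxAl -mulmxA ete mul_mx_scalar.
rewrite scalerA mulVf ?scale1r ?subrr // pnatr_eq0 -lt0n //.
Qed.

Lemma MmT : Mm^T = Mm.
Proof.
by rewrite /centering linearB /= linearZ /= trmx_mul trmxK trmx1.
Qed.

Lemma eMm : e^T *m Mm = 0.
Proof. by rewrite -MmT -trmx_mul Mme trmx0. Qed.

Lemma AMm : A *m Mm = A.
Proof.
by rewrite /centering mulmxBr mulmx1 -scalemxAr mulmxA Ae mul0mx scaler0 subr0.
Qed.

Lemma MmA : Mm *m A = A.
Proof. by apply: trmx_inj; rewrite trmx_mul AT MmT AMm. Qed.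

Lemma MmMm : Mm *m Mm = Mm.
Proof.
by rewrite {2}/centering mulmxBr mulmx1 -scalemxAr mulmxA Mme mul0mx scaler0 subr0.
Qed.

Lemma BA : Mm *m S *m Mm *m A = Mm.
Proof.
rewrite -mulmxA MmA /Amat mulmxBr -!mulmxA !(mulmxA S Si) (mulmxV S_unit) !mul1mx.
by rewrite mulmx1 !mulmxA Mme !mul0mx subr0.
Qed.

Lemma AB : A *m (Mm *m S *m Mm) = Mm.
Proof.
apply: trmx_inj; rewrite trmx_mul AT !trmx_mul MmT; case: hS => -> _.
by rewrite !mulmxA; apply: BA.
Qed.

End Mlev.

Lemma tens11 (R : realFieldType) (a b : nat) :
  (1%:M : 'M[R]_a) *t (1%:M : 'M[R]_b) = 1%:M.
Proof.
apply/matrixP=> i j.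
case: (mxtens_indexP i)=> i0 i1; case: (mxtens_indexP j)=> j0 j1.
rewrite tensmxE !mxE (inj_eq (can_inj (@mxtens_indexK a b))) xpair_eqE.
by case: (i0 == j0); case: (i1 == j1); rewrite ?mulr1 ?mulr0 ?mul0r.
Qed.

Lemma tensmxBr (R : realFieldType) (a b p q : nat) (A : 'M[R]_(a, b)) (B C : 'M[R]_(p, q)) :
  A *t (B - C) = A *t B - A *t C.
Proof. by apply/matrixP=> i j; rewrite !mxE mulrBr. Qed.

Theorem theorem5 (R : realFieldType) (n m K : nat)
  (hn : (2 <= n)%N) (hm : (2 <= m)%N) (hK : (1 <= K)%N)
  (X : 'M[R]_(n * m, K)) (Sigma : 'M[R]_m)
  (hSigma : sym_pos_def Sigma)
  (Mp : 'M[R]_(n * m)) :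
  let In : 'M[R]_n := 1%:M in
  let Siginv := invmx Sigma in
  let W : 'M[R]_(n * m) := tensmx In Siginv in
  let Z : 'M[R]_(n * m, n * 1) := tensmx In (ones R m) in
  let Q : 'M[R]_(n * m) := Z *m invmx (Z^T *m W *m Z) *m Z^T *m W in
  let P : 'M[R]_(n * m) := W *m (1%:M - Q) in
  let Mm := centering R m in
  let M : 'M[R]_(n * m) := tensmx In Mm in
  let V : 'M[R]_(n * m) := tensmx In (Mm *m Sigma *m Mm) in
  is_MP_inverse V Mp ->
  let Cp := X^T *m M *m Mp *m M *m X in
  X^T *m P *m X \in unitmx ->
  Cp \in unitmx ->
  forall y : 'cV[R]_(n * m),
    invmx Cp *m X^T *m M *m Mp *m y
    = invmx (X^T *m P *m X) *m X^T *m P *m y.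
Proof.
move=> In Siginv W Z Q P Mm M V hMP Cp _ _ y.
have hm0 : (0 < m)%N by apply: leq_trans hm.
set e := ones R m.
set c := e^T *m Siginv *m e.
set A := Amat R m Sigma.
have cu : c \in unitmx by exact: (c_unit R m Sigma hm0 hSigma).
have ZT : Z^T = In *t e^T by rewrite /Z trmx_tens trmx1.
have ZWZ : Z^T *m W *m Z = In *t c.
  by rewrite ZT /W /Z !tensmx_mul !mulmx1.
have iZWZ : invmx (Z^T *m W *m Z) = In *t invmx c.
  have h : (In *t c) *m (In *t invmx c) = 1%:M.
    by rewrite tensmx_mul mulmx1 (mulmxV cu) tens11.
  have [u _] := mulmx1_unit h.
  by rewrite ZWZ -[RHS](mulKmx u) h mulmx1.
have PE : P = In *t A.
  rewrite /P /Q iZWZ ZT /W /Z !tensmx_mul !mulmx1 -(tens11 R n m) -tensmxBr.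
  rewrite tensmx_mul mulmx1 /A /Amat mulmxBr mulmx1 !mulmxA //.
have ST : Sigma^T = Sigma by case: hSigma.
have MmA := MmA R m Sigma hm0 hSigma.
have BA := BA R m Sigma hm0 hSigma.
have AB := AB R m Sigma hm0 hSigma.
have MmMm := MmMm R m.
have VP : V *m P = M by rewrite PE /V /M tensmx_mul mulmx1 BA.
have PV : P *m V = M by rewrite PE /V /M tensmx_mul mulmx1 AB.
have VT : V^T = V by rewrite /V trmx_tens trmx1 !trmx_mul ST MmT mulmxA.
have PVP : P *m V *m P = P by rewrite PV /M PE tensmx_mul mulmx1 MmA.
have VPV : V *m P *m V = V by rewrite VP /M /V tensmx_mul mulmx1 !mulmxA MmMm.
have GP := @mp_eq R _ V P Mp M VT VPV PVP PV VP hMP.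
have MP : M *m P = P by rewrite -PV PVP.
have PM : P *m M = P by rewrite -VP mulmxA PVP.
rewrite /Cp GP -(mulmxA _ M P) MP -(mulmxA _ P M) PM -(mulmxA _ M P) MP //.
Qed.
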